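(* Let $n\ge 3$ and let $l_1=l_2=\dots=l_n=l_\infty$. Then the element $(s_{1,n}s_{1,n-1})^{n(n+1)}\in J_n$ acts as the identity on $X(l_1,\dots,l_n,l_\infty)$.
   Context: Cactus group: $J_n$ is the group generated by $s_{p,q}$, $1\le p<q\le n$, subject to the relations $s_{p,q}^2=e$; $s_{p,q}s_{p',q'}=s_{p',q'}s_{p,q}$ if $[p,q]$ and $[p',q']$ are disjoint; $s_{p,q}s_{p',q'}s_{p,q}=s_{p+q-q',p+q-p'}$ if $p\le p'<q'\le q$. Arc diagrams: fix nonnegative integers $l_1,\dots,l_n,l_\infty$. On the boundary circle of a closed disc place $n+1$ marked positions: position $0$ (occupied by $z_\infty$) and positions $1,\dots,n$ following it clockwise. An arc diagram is a bijective assignment of labels $z_1,\dots,z_n$ to positions $1,\dots,n$ together with a finite collection of simple arcs in the disc, pairwise disjoint except at endpoints, each joining two distinct marked points, such that $z_j$ is an endpoint of exactly $l_j$ arcs ($j\in\{1,\dots,n,\infty\}$; $l_j$ is the valence). Parallel arcs are allowed; diagrams are up to isotopy, equivalently determined by the labelling and the number of arcs between each pair of marked points. $X(l_1,\dots,l_n,l_\infty)$ is the set of such diagrams. Action: $s_{p,q}$ ($1\le p<q\le n$) acts by cutting off positions $p,\dots,q$ with a chord $\ell$ (arcs isotoped to cross $\ell$ at most once), reflecting that region by the reflection reversing $\ell$ (label at position $p+t$ goes to position $q-t$, crossing points on $\ell$ reversed), leaving the rest unchanged and reconnecting arcs at $\ell$. Words act right to left; this is an action of $J_n$. *)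

(* Defs.v *)
From mathcomp Require Import all_boot.
Set Implicit Arguments. Unset Strict Implicit. Unset Printing Implicit Defensive.

(* Marked positions on the circle: 'I_n.+1, position 0 is the one of z_oo,
   positions 1..n follow clockwise.  Labels are also encoded in 'I_n.+1:
   label 0 = z_oo, label j = z_j (1 <= j <= n). *)

(* A raw diagram: a labelling (position |-> label) and arc multiplicities
   a (i,j) between positions i < j (entries with i >= j are required to be 0). *)
Definition diagram (n : nat) : Type :=
  ({ffun 'I_n.+1 -> 'I_n.+1} * {ffun 'I_n.+1 * 'I_n.+1 -> nat})%type.

Definition cnt n (a : {ffun 'I_n.+1 * 'I_n.+1 -> nat}) (i j : 'I_n.+1) : nat :=
  if i < j then a (i, j) else if j < i then a (j, i) else 0.

Definition valence n (a : {ffun 'I_n.+1 * 'I_n.+1 -> nat}) (i : 'I_n.+1) : nat :=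
  \sum_(j : 'I_n.+1) cnt a i j.

(* arcs can be drawn pairwise disjoint except at endpoints *)
Definition noncrossing n (a : {ffun 'I_n.+1 * 'I_n.+1 -> nat}) : bool :=
  [forall i : 'I_n.+1, forall k : 'I_n.+1, forall j : 'I_n.+1, forall m : 'I_n.+1,
    [&& i < k, k < j & j < m] ==> (a (i, j) == 0) || (a (k, m) == 0)].

(* D is an element of X(l_1,...,l_n,l_oo), where l : 'I_n.+1 -> nat, l 0 = l_oo *)
Definition is_diagram n (l : 'I_n.+1 -> nat) (D : diagram n) : bool :=
  [&& D.1 ord0 == ord0, injectiveb D.1,
      [forall i : 'I_n.+1, forall j : 'I_n.+1, (j <= i) ==> (D.2 (i, j) == 0)],
      noncrossing D.2 &
      [forall i : 'I_n.+1, valence D.2 i == l (D.1 i)]].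

Section Action.
Variables (n p q : nat).

Definition refl (i : nat) : nat := if (p <= i) && (i <= q) then p + q - i else i.
Definition insd (i : nat) : bool := (p <= i) && (i <= q).

(* outside positions, ordered along the chord l starting from its end between
   positions p-1 and p : p-1, ..., 1, 0, n, ..., q+1 *)
Definition outs : seq nat := rev (iota 0 p) ++ rev (iota q.+1 (n - q)).

(* arcs crossing the chord, as (inside end, outside end), listed in the order
   of their crossing points along the chord (from the p-1|p end) *)
Definition crossing (a : {ffun 'I_n.+1 * 'I_n.+1 -> nat}) : seq (nat * nat) :=
  flatten [seq flatten [seq nseq (cnt a (inord i) (inord j)) (i, j) | j <- outs]
          | i <- iota p (q - p).+1].

(* after reflecting the inside, the crossing order is reversed: the outside
   half at crossing point k gets joined to the reflected inside half that now
   sits at crossing point k *)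
Definition new_crossing (a : {ffun 'I_n.+1 * 'I_n.+1 -> nat}) : seq (nat * nat) :=
  let c := crossing a in
  zip (map snd c) (map (fun e => refl e.1) (rev c)).

Definition act_s (D : diagram n) : diagram n :=
  let a := D.2 in
  ([ffun x : 'I_n.+1 => D.1 (inord (refl x))],
   [ffun e : 'I_n.+1 * 'I_n.+1 =>
      let x := e.1 in let y := e.2 in
      if x < y then
        (if insd x && insd y then cnt a (inord (refl x)) (inord (refl y))
         else if ~~ insd x && ~~ insd y then a (x, y)
         else count (fun f : nat * nat => ((f.1 == x) && (f.2 == y))
                                         || ((f.1 == y) && (f.2 == x)))
                    (new_crossing a))
      else 0]).
End Action.

(* Main.v *)
Require Import Defs.
From mathcomp Require Import all_boot zify.
Set Implicit Arguments. Unset Strict Implicit. Unset Printing Implicit Defensive.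

Lemma count_zip_nseq (T1 T2 : Type) (o : T1) (t : seq T2) (P : pred (T1 * T2)) :
  count P (zip (nseq (size t) o) t) = count (fun z => P (o, z)) t.
Proof. by elim: t => //= z t ->. Qed.

Lemma count_fl (s : seq nat) (f : nat -> nat) (o : nat) (P : pred nat) :
  count (fun e : nat * nat => P e.1) (flatten [seq nseq (f i) (i, o) | i <- s])
  = \sum_(i <- s | P i) f i.
Proof.
elim: s => [|i s IH] /=; first by rewrite big_nil.
rewrite count_cat IH big_cons count_nseq /=.
by case: (P i); rewrite ?mul1n ?mul0n.
Qed.

Lemma snd_fl (s : seq nat) (f : nat -> nat) (o : nat) :
  map snd (flatten [seq nseq (f i) (i, o) | i <- s])
  = nseq (size (flatten [seq nseq (f i) (i, o) | i <- s])) o.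
Proof.
elim: s => [|i s IH] //=.
by rewrite map_cat IH size_cat nseqD map_nseq size_nseq.
Qed.

Lemma size_fl (s : seq nat) (f : nat -> nat) (o : nat) :
  size (flatten [seq nseq (f i) (i, o) | i <- s]) = \sum_(i <- s) f i.
Proof.
elim: s => [|i s IH] /=; first by rewrite big_nil.
by rewrite size_cat IH big_cons size_nseq.
Qed.

Lemma flat_nil (T : Type) (F : nat -> seq T) s :
  (forall i, i \in s -> F i = [::]) -> flatten [seq F i | i <- s] = [::].
Proof.
elim: s => [|i s IH] H //=.
rewrite H ?mem_head // IH // => j js; apply: H; by rewrite in_cons js orbT.
Qed.

Lemma flat_split (T : Type) (F G : nat -> seq T) m k :
  (forall i j, m <= i -> i < j -> j < m + k -> G i = [::] \/ F j = [::]) ->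
  flatten [seq F i ++ G i | i <- iota m k] =
  flatten [seq F i | i <- iota m k] ++ flatten [seq G i | i <- iota m k].
Proof.
elim: k m => [|k IH] m H //=.
rewrite IH; last by move=> i j *; apply: H; lia.
have [Gm|Gm] : G m = [::] \/ flatten [seq F i | i <- iota m.+1 k] = [::].
- case: (G m) (H m) => [|g gs] Hm; first by left.
  right; apply: flat_nil => j; rewrite mem_iota => /andP[j1 j2].
  have j3 : j < m + k.+1 by lia.
  case: (Hm j (leqnn m) j1 j3) => //.
- by rewrite Gm cats0 cat0s catA.
- by rewrite Gm cats0 -!catA.
Qed.

Lemma sum_pick (s : seq nat) (r : nat) (f : nat -> nat) :
  uniq s -> r \in s -> \sum_(i <- s | i == r) f i = f r.
Proof.
move=> us rs; rewrite big_mkcond (bigD1_seq r) //= eqxx big1 ?addn0 //.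
by move=> i /negbTE ->.
Qed.

Lemma cnt_sym n (a : {ffun 'I_n.+1 * 'I_n.+1 -> nat}) i j : cnt a i j = cnt a j i.
Proof. by rewrite /cnt; case: ltngtP. Qed.

Lemma cnt_diag n (a : {ffun 'I_n.+1 * 'I_n.+1 -> nat}) i : cnt a i i = 0.
Proof. by rewrite /cnt ltnn. Qed.

Lemma crossingB n (a : {ffun 'I_n.+1 * 'I_n.+1 -> nat}) : 0 < n ->
  crossing 1 n a = flatten [seq nseq (cnt a (inord i) (inord 0)) (i,0) | i <- iota 1 n].
Proof.
move=> n0; rewrite /crossing /outs subnn subn1 prednK //.
by congr flatten; apply: eq_map => i /=; rewrite cats0.
Qed.

Lemma mixedB n (a : {ffun 'I_n.+1 * 'I_n.+1 -> nat}) x y : 0 < n -> x = 0 -> 0 < y <= n ->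
  count (fun f : nat * nat => ((f.1 == x) && (f.2 == y)) || ((f.1 == y) && (f.2 == x)))
    (new_crossing 1 n a) = cnt a (inord (n.+1 - y)) (inord 0).
Proof.
move=> n0 -> /andP[y0 yn].
rewrite /new_crossing crossingB //.
set c := flatten _.
rewrite snd_fl -/c.
have -> : size c = size (map (fun e => refl 1 n e.1) (rev c)) by rewrite size_map size_rev.
rewrite count_zip_nseq count_map count_rev.
rewrite (eq_count (a2 := fun e : nat * nat => refl 1 n e.1 == y)); last first.
  by move=> e /=; rewrite [0 == y]eq_sym (gtn_eqF y0) /= orbF.
rewrite /c (count_fl _ (fun i => cnt a (inord i) (inord 0)) 0 (fun i => refl 1 n i == y)) big_seq_cond.
rewrite (eq_bigl (fun i => i == n.+1 - y)); last first.
  move=> i; rewrite mem_iota /refl.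
  case: (i =P n.+1 - y) => [->|Hi].
    have H1 : 0 < n.+1 - y <= n by lia.
    by rewrite H1; apply/andP; split; [lia| apply/eqP; lia].
  case: (boolP (0 < i <= n)) => H1.
    by apply/negbTE/negP => /andP[_ /eqP]; lia.
  by apply/negbTE/negP => /andP[]; lia.
by rewrite sum_pick ?iota_uniq // mem_iota; lia.
Qed.

Lemma cnt_of n (a b : {ffun 'I_n.+1 * 'I_n.+1 -> nat}) (r : 'I_n.+1 -> 'I_n.+1) :
  (forall u v : 'I_n.+1, u < v -> a (u, v) = cnt b (r u) (r v)) ->
  forall u v, cnt a u v = cnt b (r u) (r v).
Proof.
move=> H u v; rewrite {1}/cnt; case: ltngtP => h.
- by apply: H.
- by rewrite H // cnt_sym.
- by rewrite (val_inj h) cnt_diag.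
Qed.

Lemma stepB n (D : diagram n) : 0 < n -> forall u v : 'I_n.+1,
  cnt (act_s 1 n D).2 u v = cnt D.2 (inord (refl 1 n u)) (inord (refl 1 n v)).
Proof.
move=> n0; apply: cnt_of => u v uv; rewrite ffunE /= uv.
have vn := ltn_ord v.
case: (posnP u) => [u0|u0].
- have -> : insd 1 n u = false by rewrite /insd u0.
  have -> : insd 1 n v = true by rewrite /insd; apply/andP; split; lia.
  rewrite /= mixedB //; last by lia.
  rewrite cnt_sym /refl u0 /=; congr cnt; congr inord.
  have -> : 0 < v <= n by lia.
  by rewrite add1n.
- have -> : insd 1 n u = true by rewrite /insd; apply/andP; split; lia.
  by have -> : insd 1 n v = true by rewrite /insd; apply/andP; split; lia.
Qed.

Lemma sum_refl p q (f : nat -> nat) y : p <= y <= q ->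
  \sum_(i <- iota p (q - p).+1 | refl p q i == y) f i = f (p + q - y).
Proof.
move=> /andP[py yq].
rewrite big_seq_cond (eq_bigl (fun i => i == p + q - y)); last first.
  move=> i; rewrite mem_iota /refl.
  case: (i =P p + q - y) => [->|Hi].
    have H1 : (p <= p + q - y) && (p + q - y <= q) by apply/andP; split; lia.
    by rewrite H1; apply/andP; split; [lia| apply/eqP; lia].
  case: (boolP ((p <= i) && (i <= q))) => H1.
    by apply/negbTE/negP => /andP[_ /eqP]; lia.
  by apply/negbTE/negP => /andP[]; lia.
by rewrite sum_pick ?iota_uniq // mem_iota; lia.
Qed.

Lemma cnt_lt n (a : {ffun 'I_n.+1 * 'I_n.+1 -> nat}) i j : i < j -> j <= n ->
  cnt a (inord i) (inord j) = a (inord i, inord j).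
Proof.
move=> ij jn; rewrite /cnt !inordK //; last by lia.
by rewrite ij.
Qed.

Lemma crossingA n (a : {ffun 'I_n.+1 * 'I_n.+1 -> nat}) : 1 < n ->
  crossing 1 n.-1 a =
  flatten [seq nseq (cnt a (inord i) (inord 0)) (i,0) ++ nseq (cnt a (inord i) (inord n)) (i,n)
          | i <- iota 1 (n.-1 - 1).+1].
Proof.
move=> n1; rewrite /crossing /outs prednK; last by lia.
have -> : n - n.-1 = 1 by lia.
by congr flatten; apply: eq_map => i /=; rewrite cats0.
Qed.

Lemma nc_use n (a : {ffun 'I_n.+1 * 'I_n.+1 -> nat}) : noncrossing a ->
  forall i j, 0 < i -> i < j -> j < n ->
  cnt a (inord i) (inord n) = 0 \/ cnt a (inord j) (inord 0) = 0.
Proof.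
move=> /forallP H i j i0 ij jn.
move: (H (inord 0)) => /forallP/(_ (inord i))/forallP/(_ (inord j))/forallP/(_ (inord n)).
rewrite !inordK; try lia.
rewrite i0 ij jn /= => /orP[/eqP h|/eqP h].
- by right; rewrite cnt_sym cnt_lt //; lia.
- by left; rewrite cnt_lt //; lia.
Qed.

Lemma mixedA n (a : {ffun 'I_n.+1 * 'I_n.+1 -> nat}) x y : 1 < n -> noncrossing a ->
  \sum_(i <- iota 1 (n.-1 - 1).+1) cnt a (inord i) (inord 0) =
  \sum_(i <- iota 1 (n.-1 - 1).+1) cnt a (inord i) (inord n) ->
  x < y -> y <= n -> ~~ (insd 1 n.-1 x && insd 1 n.-1 y) ->
  ~~ (~~ insd 1 n.-1 x && ~~ insd 1 n.-1 y) ->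
  count (fun f : nat * nat => ((f.1 == x) && (f.2 == y)) || ((f.1 == y) && (f.2 == x)))
    (new_crossing 1 n.-1 a) = cnt a (inord (n - x)) (inord (n - y)).
Proof.
move=> n1 NC bal xy yn H1 H2.
rewrite /new_crossing crossingA //.
set s := iota 1 (n.-1 - 1).+1.
rewrite (flat_split (F := fun i => nseq (cnt a (inord i) (inord 0)) (i,0))
                    (G := fun i => nseq (cnt a (inord i) (inord n)) (i,n))); last first.
  move=> i j i1 ij jn.
  have [h|h] := nc_use NC i1 ij ltac:(lia).
  - by left; rewrite h.
  - by right; rewrite h.
set c0 := flatten [seq nseq (cnt a (inord i) (inord 0)) (i, 0) | i <- s].
set cn := flatten [seq nseq (cnt a (inord i) (inord n)) (i, n) | i <- s].
set g := fun e : nat * nat => refl 1 n.-1 e.1.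
have e0 : map snd c0 = nseq (size c0) 0 by rewrite /c0 snd_fl.
have en : map snd cn = nseq (size cn) n by rewrite /cn snd_fl.
rewrite map_cat e0 en rev_cat map_cat.
have sz : size c0 = size (map g (rev cn)) by rewrite size_map size_rev /c0 /cn !size_fl /s bal.
rewrite zip_cat; last by rewrite size_nseq.
rewrite count_cat sz count_zip_nseq.
have -> : size cn = size (map g (rev c0)) by rewrite size_map size_rev /c0 /cn !size_fl /s bal.
rewrite count_zip_nseq !count_map !count_rev.
have cs : (x = 0 /\ 1 <= y /\ y <= n.-1) \/ (y = n /\ 1 <= x /\ x <= n.-1).
  move: H1 H2; rewrite /insd; lia.
case: cs => [[X0 [y1 y2]]|[Yn [x1 x2]]]; [subst x|subst y].
- rewrite (eq_count (a1 := fun e => _) (a2 := fun e : nat * nat => refl 1 n.-1 e.1 == y)); last first.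
    by move=> e /=; rewrite [0 == y]eq_sym (gtn_eqF y1) orbF.
  rewrite [count _ c0](eq_count (a2 := pred0)); last first.
    move=> e /=; rewrite /g; apply/negbTE/negP => /orP[/andP[/eqP h _]|/andP[/eqP h _]]; lia.
  rewrite count_pred0 addn0.
  rewrite /cn (count_fl _ (fun i => cnt a (inord i) (inord n)) n (fun i => refl 1 n.-1 i == y)).
  rewrite sum_refl; last by lia.
  rewrite cnt_sym subn0; congr cnt; congr inord; lia.
- rewrite (eq_count (a1 := fun e => _) (a2 := pred0)); last first.
    move=> e /=; rewrite /g; apply/negbTE/negP => /orP[/andP[/eqP h _]|/andP[/eqP h _]]; lia.
  rewrite [count _ c0](eq_count (a2 := fun e : nat * nat => refl 1 n.-1 e.1 == x)); last first.
    by move=> e /=; rewrite eqxx /= gtn_eqF //; lia.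
  rewrite count_pred0 add0n.
  rewrite /c0 (count_fl _ (fun i => cnt a (inord i) (inord 0)) 0 (fun i => refl 1 n.-1 i == x)).
  rewrite sum_refl; last by lia.
  rewrite subnn; congr cnt; congr inord; lia.
Qed.

Lemma stepA n (D : diagram n) : 1 < n -> noncrossing D.2 ->
  \sum_(i <- iota 1 (n.-1 - 1).+1) cnt D.2 (inord i) (inord 0) =
  \sum_(i <- iota 1 (n.-1 - 1).+1) cnt D.2 (inord i) (inord n) ->
  forall u v : 'I_n.+1,
  cnt (act_s 1 n.-1 D).2 u v = cnt D.2 (inord (n - u)) (inord (n - v)).
Proof.
move=> n1 NC bal; apply: cnt_of => u v uv; rewrite ffunE /= uv.
have vn := ltn_ord v.
case: (boolP (insd 1 n.-1 u && insd 1 n.-1 v)) => h1.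
  move: h1; rewrite /insd /refl => /andP[-> ->] /=.
  by congr cnt; congr inord; lia.
case: (boolP (~~ insd 1 n.-1 u && ~~ insd 1 n.-1 v)) => h2; last first.
  by rewrite mixedA.
have [u0 vn'] : u = 0 :> nat /\ v = n :> nat by move: h2; rewrite /insd; lia.
rewrite cnt_sym cnt_lt; last by lia.
  by rewrite u0 vn' subn0 subnn; congr (D.2 (_, _)); apply: val_inj; rewrite /= inordK; lia.
lia.
Qed.

Definition sig n x := refl 1 n.-1 (refl 1 n x).
Definition rho n x := n - refl 1 n x.

Lemma sigE n x : 1 < n -> x <= n ->
  sig n x = if x == 0 then 0 else if x == 1 then n else x.-1.
Proof.
move=> n1 xn; rewrite /sig /refl.
case: (posnP x) => [->|x0] //=.
rewrite xn /=; case: (boolP (0 < 1 + n - x <= n.-1)) => h.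
  by case: eqP => e; lia.
by case: eqP => e; move: h; lia.
Qed.

Lemma rhoE n x : x <= n -> rho n x = if x == 0 then n else x.-1.
Proof.
move=> xn; rewrite /rho /refl.
case: (posnP x) => [->|x0] //=; first by rewrite subn0.
rewrite xn /=; lia.
Qed.

Lemma refl_le n x : x <= n -> refl 1 n x <= n.
Proof. rewrite /refl; case: ifP => // /andP[]; lia. Qed.

Lemma sig_le n x : 1 < n -> x <= n -> sig n x <= n.
Proof. move=> n1 xn; rewrite sigE //; case: ifP => _ //; case: ifP => _; lia. Qed.

Lemma rho_le n x : x <= n -> rho n x <= n.
Proof. rewrite /rho; lia. Qed.

Definition R1 n (D : diagram n) : diagram n :=
  ([ffun x : 'I_n.+1 => D.1 (inord (sig n x))],
   [ffun e : 'I_n.+1 * 'I_n.+1 =>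
      if e.1 < e.2 then cnt D.2 (inord (rho n e.1)) (inord (rho n e.2)) else 0]).

Lemma act_LZ n p q (D : diagram n) (u v : 'I_n.+1) :
  (act_s p q D).2 (u, v) = if u < v then cnt (act_s p q D).2 u v else 0.
Proof.
case: (ltnP u v) => h; first by rewrite /cnt h.
by rewrite ffunE /= ltnNge h.
Qed.

Lemma cnt_R n (b : {ffun 'I_n.+1 * 'I_n.+1 -> nat}) (r : 'I_n.+1 -> 'I_n.+1) u v :
  cnt [ffun e : 'I_n.+1 * 'I_n.+1 => if e.1 < e.2 then cnt b (r e.1) (r e.2) else 0] u v
  = cnt b (r u) (r v).
Proof. by apply: cnt_of => {}u {}v uv; rewrite ffunE /= uv. Qed.

Lemma valence_split n (a : {ffun 'I_n.+1 * 'I_n.+1 -> nat}) i : 1 < n ->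
  valence a i = cnt a i (inord 0) + \sum_(j <- iota 1 (n.-1 - 1).+1) cnt a i (inord j)
                + cnt a i (inord n).
Proof.
move=> n1; rewrite /valence (eq_bigr (fun j : 'I_n.+1 => cnt a i (inord j))); last first.
  by move=> j _; rewrite inord_val.
rewrite -(big_mkord xpredT (fun j => cnt a i (inord j))).
rewrite big_nat_recr //= big_ltn; last by lia.
congr (_ + _ + _); rewrite /index_iota; have -> : n - 1 = (n.-1 - 1).+1 by lia.
by [].
Qed.

Lemma balance n l (D : diagram n) : 1 < n -> (forall i : 'I_n.+1, l i = l ord0) ->
  is_diagram l D ->
  \sum_(i <- iota 1 (n.-1 - 1).+1) cnt D.2 (inord i) (inord 0) =
  \sum_(i <- iota 1 (n.-1 - 1).+1) cnt D.2 (inord i) (inord n).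
Proof.
move=> n1 hl /and5P[_ _ _ _ /forallP V].
have V0 := V (inord 0); have Vn := V (inord n).
move/eqP: V0; move/eqP: Vn; rewrite hl (hl (D.1 _)) !valence_split //.
rewrite !cnt_diag (cnt_sym _ (inord n) (inord 0)).
have E0 : \sum_(j <- iota 1 (n.-1 - 1).+1) cnt D.2 (inord 0) (inord j) =
          \sum_(j <- iota 1 (n.-1 - 1).+1) cnt D.2 (inord j) (inord 0).
  by apply: eq_bigr => j _; rewrite cnt_sym.
have En : \sum_(j <- iota 1 (n.-1 - 1).+1) cnt D.2 (inord n) (inord j) =
          \sum_(j <- iota 1 (n.-1 - 1).+1) cnt D.2 (inord j) (inord n).
  by apply: eq_bigr => j _; rewrite cnt_sym.
rewrite E0 En; lia.
Qed.

Lemma T_eq n l (D : diagram n) : 1 < n -> (forall i : 'I_n.+1, l i = l ord0) ->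
  is_diagram l D -> act_s 1 n (act_s 1 n.-1 D) = R1 D.
Proof.
move=> n1 hl VD.
have bal := balance n1 hl VD.
have NC : noncrossing D.2 by case/and5P: VD.
rewrite /R1; congr (_, _); apply/ffunP => x.
  rewrite !ffunE inordK; first by [].
  apply: refl_le; exact: (ltn_ord x).
case: x => u v; rewrite act_LZ ffunE.
case: ifP => // uv.
rewrite stepB; last by lia.
rewrite stepA // !inordK //.
all: by rewrite ltnS; apply: refl_le; rewrite -ltnS.
Qed.

Lemma rho0 n : rho n 0 = n.
Proof. by rewrite rhoE. Qed.
Lemma rhoS n x : 0 < x <= n -> rho n x = x.-1.
Proof. move=> /andP[x0 xn]; rewrite rhoE // gtn_eqF //. Qed.
Lemma sig0 n : 1 < n -> sig n 0 = 0.
Proof. by move=> n1; rewrite sigE. Qed.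
Lemma sig1 n : 1 < n -> sig n 1 = n.
Proof. by move=> n1; rewrite sigE //; lia. Qed.
Lemma sigS n x : 1 < n -> 1 < x <= n -> sig n x = x.-1.
Proof. move=> n1 /andP[x1 xn]; rewrite sigE // gtn_eqF ?gtn_eqF //; lia. Qed.

Lemma rho_nat n x : x <= n -> (x = 0 /\ rho n x = n) \/ (0 < x /\ rho n x = x.-1).
Proof.
move=> xn; case: (posnP x) => [->|x0]; first by left; rewrite rho0.
by right; split => //; rewrite rhoS //; lia.
Qed.

Lemma sig_nat n x : 1 < n -> x <= n ->
  (x = 0 /\ sig n x = 0) \/ (x = 1 /\ sig n x = n) \/ (1 < x /\ sig n x = x.-1).
Proof.
move=> n1 xn; case: (posnP x) => [->|x0]; first by left; rewrite sig0.
case: (x =P 1) => [->|x1]; first by right; left; rewrite sig1.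
by right; right; split; [lia|rewrite sigS //; lia].
Qed.

Lemma nc_inst n (a : {ffun 'I_n.+1 * 'I_n.+1 -> nat}) : noncrossing a ->
  forall i k j m, i < k -> k < j -> j < m -> m <= n ->
  cnt a (inord i) (inord j) = 0 \/ cnt a (inord k) (inord m) = 0.
Proof.
move=> /forallP H i k j m ik kj jm mn.
move: (H (inord i)) => /forallP/(_ (inord k))/forallP/(_ (inord j))/forallP/(_ (inord m)).
rewrite !inordK; try lia.
rewrite ik kj jm /= => /orP[/eqP h|/eqP h].
- by left; rewrite cnt_lt //; lia.
- by right; rewrite cnt_lt //; lia.
Qed.

Lemma rho_inj n : injective (fun x : 'I_n.+1 => (inord (rho n x) : 'I_n.+1)).
Proof.
move=> x y /(f_equal val) /=; rewrite !inordK; try (rewrite ltnS; apply: rho_le; rewrite -ltnS; exact: ltn_ord).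
have xn := ltn_ord x; have yn := ltn_ord y.
move=> h; apply: val_inj => /=; move: h.
have := rho_nat (n := n) (x := x) ltac:(lia); have := rho_nat (n := n) (x := y) ltac:(lia).
lia.
Qed.

Lemma sig_inj n : 1 < n -> injective (fun x : 'I_n.+1 => (inord (sig n x) : 'I_n.+1)).
Proof.
move=> n1 x y /(f_equal val) /=; rewrite !inordK; try (rewrite ltnS; apply: sig_le => //; rewrite -ltnS; exact: ltn_ord).
have xn := ltn_ord x; have yn := ltn_ord y.
move=> h; apply: val_inj => /=; move: h.
have := sig_nat (x := x) n1 ltac:(lia); have := sig_nat (x := y) n1 ltac:(lia).
lia.
Qed.

Lemma R1_valid n l (D : diagram n) : 1 < n -> (forall i : 'I_n.+1, l i = l ord0) ->
  is_diagram l D -> is_diagram l (R1 D).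
Proof.
move=> n1 hl /and5P[D0 Dinj DLZ NC /forallP V].
apply/and5P; split.
- rewrite ffunE.
  have -> : inord (sig n (@ord0 n)) = (@ord0 n) by apply: val_inj; rewrite /= sig0 // inordK.
  exact: D0.
- move/injectiveP: Dinj => Dinj.
  apply/injectiveP => x y; rewrite !ffunE => /Dinj; exact: sig_inj.
- apply/forallP => i; apply/forallP => j; apply/implyP => h.
  by rewrite ffunE /= ltnNge h.
- apply/forallP => i; apply/forallP => k; apply/forallP => j; apply/forallP => m.
  apply/implyP => /and3P[ik kj jm].
  rewrite !ffunE /= (ltn_trans ik kj) (ltn_trans kj jm).
  have mn := ltn_ord m.
  rewrite (rhoS (x := j)) ?(rhoS (x := k)) ?(rhoS (x := m)); try lia.
  case: (posnP i) => [i0|ip].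
  + rewrite i0 rho0.
    have [h|h] := nc_inst NC (i := k.-1) (k := j.-1) (j := m.-1) (m := n) ltac:(lia) ltac:(lia) ltac:(lia) ltac:(lia).
    * by rewrite h eqxx orbT.
    * by rewrite cnt_sym h eqxx.
  + rewrite rhoS; last by lia.
    have [h|h] := nc_inst NC (i := i.-1) (k := k.-1) (j := j.-1) (m := m.-1) ltac:(lia) ltac:(lia) ltac:(lia) ltac:(lia).
    * by rewrite h eqxx.
    * by rewrite h eqxx orbT.
- apply/forallP => i; rewrite ffunE.
  rewrite hl; apply/eqP.
  rewrite /valence.
  have cR := cnt_R D.2 (fun x : 'I_n.+1 => (inord (rho n x) : 'I_n.+1)).
  under eq_bigr => j _ do rewrite /= cR.
  rewrite -(reindex_inj (@rho_inj n) (F := fun j => cnt D.2 (inord (rho n i)) j) (P := xpredT)) /=.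
  by move/eqP: (V (inord (rho n i))); rewrite /valence hl => ->.
Qed.

Lemma iter_rho n k x : x <= n -> iter k (rho n) x = (x + k * n) %% n.+1.
Proof.
move=> xn; elim: k => [|k IH] /=; first by rewrite mul0n addn0 modn_small.
rewrite IH.
set y := (x + k * n) %% n.+1.
have yn : y <= n by rewrite -ltnS ltn_pmod.
have -> : rho n y = (y + n) %% n.+1.
  case: (posnP y) => [y0|y0].
    by rewrite y0 rho0 add0n modn_small.
  rewrite rhoS; last by lia.
  have -> : y + n = y.-1 + n.+1 by lia.
  by rewrite modnDr modn_small //; lia.
by rewrite /y modnDml; congr (_ %% _); rewrite mulSn; lia.
Qed.

Lemma iter_sig0 n k : 1 < n -> iter k (sig n) 0 = 0.
Proof. by move=> n1; elim: k => //= k ->; rewrite sig0. Qed.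

Lemma iter_sig n k x : 1 < n -> 0 < x <= n ->
  iter k (sig n) x = ((x.-1 + k * n.-1) %% n).+1.
Proof.
move=> n1 /andP[x0 xn]; elim: k => [|k IH] /=.
  by rewrite mul0n addn0 modn_small; lia.
rewrite IH.
set r := (x.-1 + k * n.-1) %% n.
have rn : r < n by rewrite ltn_pmod //; lia.
have -> : sig n r.+1 = ((r + n.-1) %% n).+1.
  case: (posnP r) => [r0|r0].
    by rewrite r0 sig1 // add0n modn_small //; lia.
  rewrite sigS //; last by lia.
  have -> : r + n.-1 = r.-1 + n by lia.
  by rewrite modnDr modn_small //; lia.
by rewrite /r modnDml; congr (_ %% _).+1; rewrite mulSn; lia.
Qed.

Lemma rho_period n x : x <= n -> iter (n * n.+1) (rho n) x = x.
Proof.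
move=> xn; rewrite iter_rho //.
have -> : x + n * n.+1 * n = n * n * n.+1 + x by rewrite mulnAC addnC.
by rewrite modnMDl modn_small.
Qed.

Lemma sig_period n x : 1 < n -> x <= n -> iter (n * n.+1) (sig n) x = x.
Proof.
move=> n1 xn; case: (posnP x) => [->|x0]; first exact: iter_sig0.
rewrite iter_sig //; last by lia.
have -> : x.-1 + n * n.+1 * n.-1 = n.+1 * n.-1 * n + x.-1.
  by rewrite addnC; congr (_ + _); rewrite [RHS]mulnC mulnA.
by rewrite modnMDl modn_small; lia.
Qed.

Definition Rk n k (D : diagram n) : diagram n :=
  ([ffun x : 'I_n.+1 => D.1 (inord (iter k (sig n) x))],
   [ffun e : 'I_n.+1 * 'I_n.+1 =>
      if e.1 < e.2 then cnt D.2 (inord (iter k (rho n) e.1)) (inord (iter k (rho n) e.2))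
      else 0]).

Lemma R1_Rk n k (D : diagram n) : 1 < n -> R1 (Rk k D) = Rk k.+1 D.
Proof.
move=> n1; rewrite /R1 /Rk; congr (_, _); apply/ffunP => x; rewrite !ffunE.
  rewrite inordK ?iterSr //; rewrite ltnS; apply: sig_le => //; rewrite -ltnS; exact: ltn_ord.
case: ifP => // uv.
rewrite (cnt_R D.2 (fun x : 'I_n.+1 => (inord (iter k (rho n) x) : 'I_n.+1))) /=.
rewrite !inordK; first by rewrite -!iterSr.
all: rewrite ltnS; apply: rho_le; rewrite -ltnS; exact: ltn_ord.
Qed.

Lemma Rk0 n l (D : diagram n) : is_diagram l D -> Rk 0 D = D.
Proof.
case/and5P => _ _ /forallP LZ _ _.
case: D LZ => d1 d2 /= LZ.
rewrite /Rk /=; congr (_, _); apply/ffunP => x; rewrite !ffunE /=.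
  by rewrite inord_val.
case: x => u v /=; rewrite !inord_val /cnt.
case: ltnP => // h.
by move/forallP: (LZ u) => /(_ v) /implyP /(_ h) /eqP ->.
Qed.

Theorem mainTheorem16 (n : nat) (l : 'I_n.+1 -> nat) :
  3 <= n ->
  (forall i : 'I_n.+1, l i = l ord0) ->
  forall D : diagram n, is_diagram l D ->
  iter (n * n.+1) (fun E => @act_s n 1 n (@act_s n 1 n.-1 E)) D = D.
Proof.
move=> n3 hl D VD.
have n1 : 1 < n by lia.
have H : forall k, iter k (fun E => @act_s n 1 n (@act_s n 1 n.-1 E)) D = Rk k D
                   /\ is_diagram l (Rk k D).
  elim=> [|k [IH V]] /=; first by rewrite (Rk0 VD).
  rewrite IH (T_eq n1 hl V) R1_Rk //; split => //.
  by rewrite -R1_Rk //; apply: R1_valid.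
case: (H (n * n.+1)) => -> _.
rewrite -{2}(Rk0 VD) /Rk; congr (_, _); apply/ffunP => x; rewrite !ffunE.
  by rewrite sig_period // -ltnS.
by rewrite !rho_period // -ltnS.
Qed.
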